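(* Let $A$ be the matrix described in the context. Diffusion occurs from a small seed if and only if the largest eigenvalue $\mu$ of $A$ (its Perron root) satisfies $\mu>1$.
   Context: There are $m\ge1$ types. $\Pi=(\pi_{ij})$ is a nonnegative row-stochastic $m\times m$ matrix ($\pi_{ij}$ is the probability that a meeting of a type-$i$ agent is with a type-$j$ agent) which is primitive (some power has all entries strictly positive). For each type $i$: $P_i$ is a degree distribution on the nonnegative integers; $w_i(d)>0$ are degree weights for $d$ with $P_i(d)>0$; $f_i(d,a)$, $g_i(d,a)$ ($0\le a\le d$) are the adoption and abandonment rates of a type-$i$, degree-$d$ agent meeting $a$ adopters, satisfying: $f_i(d,0)=0$; $f_i(d,a)$ nondecreasing in $a$; $f_i(d,1)>0$ for some $d$ with $P_i(d)>0$; $g_i(d,0)>0$; $g_i(d,a)$ nonincreasing in $a$. Let $x_i=\sum_dP_i(d)w_i(d)\,d\,\frac{f_i(d,1)}{g_i(d,0)}$, assumed finite; it is positive. $A$ is the $m\times m$ matrix with $A_{ij}=\pi_{ij}x_j$ (the linearization at zero of the steady-state map for the probabilities of meeting an adopter). Diffusion occurs from a small seed means: for every $\varepsilon>0$ there exists $v\in\mathbb{R}^m$ with $0<v_i<\varepsilon$ and $(Av)_i>v_i$ for all $i$. *)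

(* Defs.v *)
From mathcomp Require Import all_boot all_order all_algebra.
From mathcomp Require Import all_classical all_reals all_analysis.
From mathcomp Require Import complex.
Set Implicit Arguments. Unset Strict Implicit. Unset Printing Implicit Defensive.
Import Order.TTheory GRing.Theory Num.Theory.
Import numFieldNormedType.Exports.
Local Open Scope ring_scope.
Local Open Scope complex_scope.

Definition x_term (R : realType) (m : nat) (P w : 'I_m -> nat -> R)
  (f g : 'I_m -> nat -> nat -> R) (i : 'I_m) (d : nat) : R :=
  P i d * w i d * d%:R * f i d 1%N / g i d 0%N.

Definition x_val (R : realType) (m : nat) (P w : 'I_m -> nat -> R)
  (f g : 'I_m -> nat -> nat -> R) (i : 'I_m) : R :=
  limn (series (x_term P w f g i)).

Definition A_mat (R : realType) (n : nat) (Pi : 'M[R]_n.+1)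
  (x : 'I_n.+1 -> R) : 'M[R]_n.+1 :=
  \matrix_(i, j) (Pi i j * x j).

Definition small_seed_diffusion (R : realType) (n : nat) (A : 'M[R]_n.+1) : Prop :=
  forall eps : R, 0 < eps ->
    exists v : 'cV[R]_n.+1,
      forall i, 0 < v i 0 /\ v i 0 < eps /\ (A *m v) i 0 > v i 0.

Definition perron_root (R : realType) (n : nat) (A : 'M[R]_n.+1) (mu : R) : Prop :=
  eigenvalue A mu /\
  forall z : R[i], eigenvalue (map_mx (fun r : R => r%:C) A) z -> `|z| <= mu%:C.

(* Main.v *)
Require Import Defs.
From mathcomp Require Import all_boot all_order all_algebra.
From mathcomp Require Import all_classical all_reals all_analysis.
From mathcomp Require Import complex.
Import Order.TTheory GRing.Theory Num.Theory.
Import numFieldNormedType.Exports.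
Set Implicit Arguments. Unset Strict Implicit.
Local Open Scope classical_set_scope.
Local Open Scope ring_scope.
Local Open Scope complex_scope.

Section S.
Variable R : realType.

Lemma poly_right_ge0 (p : {poly R}) s : (forall u, s < u -> 0 <= p.[u]) -> 0 <= p.[s].
Proof.
move=> H; rewrite leNgt; apply/negP => ps.
have c := @continuous_horner R p s.
have c' := cvg_at_right_filter c.
have FF : ProperFilter (s^'+)%classic := at_right_proper_filter s.
have Hn : \forall t \near (s^'+)%classic, p.[t] < 0 := cvgr_lt _ c' 0 ps.
have [u [u1 u2]] := filter_ex (filterI (Hn FF) (nbhs_right_gt s)).
by have := H u u2; rewrite leNgt u1.
Qed.

Lemma eig_det m (A : 'M[R]_m) a : eigenvalue A a = (\det (a%:M - A) == 0).
Proof.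
apply/eigenvalueP/det0P=> [[v Av_av v_nz] | [v v_nz Av_av]]; exists v => //.
  by rewrite mulmxBr Av_av mul_mx_scalar subrr.
by apply/eqP; rewrite -mul_mx_scalar eq_sym -subr_eq0 -mulmxBr Av_av.
Qed.

Lemma det_horner m (A : 'M[R]_m) a : \det (a%:M - A) = (char_poly A).[a].
Proof.
rewrite horner_sum; apply: eq_bigr => s _.
rewrite hornerM horner_exp !hornerE; congr (_ * _).
rewrite (big_morph _ (fun p q => hornerM p q a) (hornerC 1 a)).
by apply: eq_bigr => i _; rewrite !mxE !(hornerE, hornerMn).
Qed.

Lemma map_char_poly_mx m (A : 'M[R]_m) a :
  map_mx (horner_eval a) (char_poly_mx A) = a%:M - A.
Proof.
by apply/matrixP => i j; rewrite !mxE /horner_eval !(hornerE, hornerMn).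
Qed.

Lemma adj_horner m (A : 'M[R]_m) a i j :
  \adj (a%:M - A) i j = (\adj (char_poly_mx A) i j).[a].
Proof.
rewrite -map_char_poly_mx -map_mx_adj mxE //.
Qed.
Lemma fin_argmin (I : finType) (i0 : I) (F : I -> R) : exists j, forall i, F j <= F i.
Proof.
case: (@arg_minP _ _ I i0 xpredT F isT) => j _ H; exists j => i; exact: H.
Qed.

Lemma fin_argmax (I : finType) (i0 : I) (F : I -> R) : exists j, forall i, F i <= F j.
Proof.
case: (@arg_maxP _ _ I i0 xpredT F isT) => j _ H; exists j => i; exact: H.
Qed.

Lemma MP m (B : 'M[R]_m) t (y x : 'cV[R]_m) :
  (forall i j, 0 <= B i j) -> (forall i, 0 < y i 0) ->
  (forall i, (B *m y) i 0 < t * y i 0) ->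
  (forall i, (B *m x) i 0 <= t * x i 0) -> forall i, 0 <= x i 0.
Proof.
move=> B0 y0 By Bx i; rewrite leNgt; apply/negP => xi.
have [j Hj] := fin_argmin i (fun k => x k 0 / y k 0).
have yj := y0 j.
have xj : x j 0 < 0.
  have : x j 0 / y j 0 < 0.
    apply: le_lt_trans (_ : x i 0 / y i 0 < 0); first exact: Hj.
    by rewrite pmulr_llt0 ?invr_gt0.
  by rewrite pmulr_llt0 ?invr_gt0.
set lam := - (x j 0 / y j 0).
have lam0 : 0 < lam by rewrite /lam oppr_gt0 pmulr_llt0 ?invr_gt0.
pose z := x + lam *: y.
have z0 : forall k, 0 <= z k 0.
  move=> k; rewrite /z !mxE /lam mulNr subr_ge0.
  by rewrite -ler_pdivlMr ?y0 //; exact: Hj.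
have zj : z j 0 = 0.
  by rewrite /z !mxE /lam mulNr -mulrA mulVf ?gt_eqF // mulr1 subrr.
have Bz0 : 0 <= (B *m z) j 0.
  by rewrite mxE; apply: sumr_ge0 => k _; apply: mulr_ge0.
have : (B *m z) j 0 < t * z j 0.
  have -> : (B *m z) j 0 = (B *m x) j 0 + lam * (B *m y) j 0.
    by rewrite /z mulmxDr -scalemxAr [LHS]mxE [X in _ + X]mxE.
  have -> : z j 0 = x j 0 + lam * y j 0 by rewrite /z !mxE.
  rewrite mulrDr.
  apply: ler_ltD; first exact: Bx.
  by rewrite mulrCA ltr_pM2l //; exact: By.
by rewrite zj mulr0 ltNge Bz0.
Qed.

Definition good m (B : 'M[R]_m) t := exists y : 'cV[R]_m,
  (forall i, 0 < y i 0) /\ (forall i, (B *m y) i 0 < t * y i 0).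

Lemma good_up m (B : 'M[R]_m) t u : good B t -> t <= u -> good B u.
Proof.
move=> [y [y0 Hy]] tu; exists y; split => // i.
by apply: (lt_le_trans (Hy i)); rewrite ler_pM2r.
Qed.

Lemma mulmx_ge0 m (B : 'M[R]_m) (y : 'cV[R]_m) i :
  (forall i j, 0 <= B i j) -> (forall j, 0 <= y j 0) -> 0 <= (B *m y) i 0.
Proof. by move=> B0 y0; rewrite mxE; apply: sumr_ge0 => j _; apply: mulr_ge0. Qed.

Lemma good_pos n (B : 'M[R]_n.+1) t : (forall i j, 0 <= B i j) -> good B t -> 0 < t.
Proof.
move=> B0 [y [y0 Hy]].
have := le_lt_trans (mulmx_ge0 ord0 B0 (fun j => ltW (y0 j))) (Hy ord0).
by rewrite pmulr_lgt0.
Qed.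

Lemma good_big m (B : 'M[R]_m) : (forall i j, 0 <= B i j) ->
  good B (1 + \sum_i \sum_j B i j).
Proof.
move=> B0; exists (const_mx 1); split => [i|i]; first by rewrite mxE.
rewrite mxE [X in _ < _ * X]mxE mulr1.
under eq_bigr do rewrite mxE mulr1.
rewrite ltr_pwDl // [leRHS](bigD1 i) //= lerDl.
by apply: sumr_ge0 => k _; apply: sumr_ge0.
Qed.

Definition yv m (B : 'M[R]_m) u : 'cV[R]_m :=
  (\det (u%:M - B))^-1 *: (\adj (u%:M - B) *m const_mx 1).

Lemma yv_eq m (B : 'M[R]_m) u i : \det (u%:M - B) != 0 ->
  (B *m yv B u) i 0 = u * yv B u i 0 - 1.
Proof.
move=> d0.
have H : (u%:M - B) *m yv B u = const_mx 1.
  rewrite /yv -scalemxAr mulmxA mul_mx_adj mul_scalar_mx scalerA mulVf //.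
  by rewrite scale1r.
have : ((u%:M - B) *m yv B u) i 0 = 1 by rewrite H mxE.
rewrite mulmxBl mul_scalar_mx => E1.
rewrite -E1.
have -> : (u *: yv B u - B *m yv B u) i 0 = u * yv B u i 0 - (B *m yv B u) i 0.
  by rewrite !mxE.
by rewrite opprB addrC subrK.
Qed.

Definition Qp m (B : 'M[R]_m) (i : 'I_m) : {poly R} :=
  char_poly B * \sum_j \adj (char_poly_mx B) i j.

Lemma Qp_eq m (B : 'M[R]_m) u i : \det (u%:M - B) != 0 ->
  (Qp B i).[u] = (\det (u%:M - B)) ^+ 2 * yv B u i 0.
Proof.
move=> d0; rewrite /Qp hornerM -det_horner horner_sum /yv.
rewrite [X in _ = _ * X]mxE [X in _ = _ * (_ * X)]mxE.
rewrite expr2 -mulrA; congr (_ * _).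
rewrite mulrA mulfV // mul1r; apply: eq_bigr => j _.
by rewrite [const_mx 1 j 0]mxE mulr1 adj_horner.
Qed.

Lemma good_all n (B : 'M[R]_n.+1) mu : (forall i j, 0 <= B i j) ->
  (forall a, eigenvalue B a -> a <= mu) -> forall t, mu < t -> good B t.
Proof.
move=> B0 Hev t mut.
have [//|nG] := pselect (good B t).
pose E : set R := fun u => good B u.
have hE : E !=set0 by exists (1 + \sum_i \sum_j B i j); exact: good_big.
have hlb : has_lbound E by exists 0 => u Eu; exact/ltW/(good_pos B0 Eu).
have hinf : has_inf E by [].
set s := inf E.
have ts : t <= s.
  apply: lb_le_inf => // u Eu; rewrite leNgt; apply/negP => ut.
  by apply: nG; apply: good_up Eu (ltW ut).
have Gu : forall u, s < u -> good B u.
  move=> u su; have [e Ee] := inf_adherent (eqbRL (subr_gt0 s u) su) hinf.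
  by rewrite addrC subrK => eu; apply: good_up Ee (ltW eu).
have detnz : forall u, s <= u -> \det (u%:M - B) != 0.
  move=> u su; apply/negP => /eqP h.
  have := Hev u; rewrite eig_det h eqxx => /(_ isT).
  by rewrite leNgt (lt_le_trans mut (le_trans ts su)).
have Qpos : forall i u, s < u -> 0 <= (Qp B i).[u].
  move=> i u su; have du := detnz u (ltW su); rewrite Qp_eq //.
  apply: mulr_ge0; first exact: sqr_ge0.
  have [y [y0 Hy]] := Gu u su.
  apply: (MP B0 y0 Hy) => k.
  by rewrite yv_eq // gerBl.
pose ys := yv B s.
have ys0 : forall i, 0 <= ys i 0.
  move=> i; have := poly_right_ge0 (Qpos i); rewrite Qp_eq ?detnz //.
  by rewrite pmulr_rge0 // exprn_even_gt0 //= detnz.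
have ds := detnz s (lexx s).
have ysE : forall i, (B *m ys) i 0 = s * ys i 0 - 1 by move=> i; exact: yv_eq.
have ysp : forall i, 0 < ys i 0.
  move=> i; rewrite lt_def ys0 andbT; apply/negP => /eqP y0.
  have := mulmx_ge0 i B0 ys0; rewrite ysE y0 mulr0 sub0r oppr_ge0.
  by rewrite ler10.
have [j Hj] := fin_argmax ord0 (fun k => ys k 0).
pose M := ys j 0.
have M0 : 0 < M := ysp j.
pose d := (2 * M)^-1.
have d0 : 0 < d by rewrite invr_gt0 mulr_gt0.
have Gd : good B (s - d).
  exists ys; split => // i; rewrite ysE mulrBl ltrD2l ltrN2.
  apply: (le_lt_trans (y := d * M)); first by rewrite ler_pM2l //; exact: Hj.
  by rewrite /d invfM -mulrA mulVf ?gt_eqF // mulr1 invf_lt1 // ltr1n.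
have := ge_inf hlb Gd; rewrite -/s => H.
have : s - d < s by rewrite gtrBl.
by rewrite ltNge H.
Qed.

Lemma series_pos (u : nat -> R) d : (forall k, 0 <= u k) -> 0 < u d ->
  cvgn (series u) -> 0 < limn (series u).
Proof.
move=> u0 ud cu.
have nd : nondecreasing_seq (series u).
  by apply/nondecreasing_seqP => k; rewrite seriesSr lerDl.
apply: (lt_le_trans _ (nondecreasing_cvgn_le nd cu d.+1)).
rewrite seriesSr; apply: ltr_wpDl => //.
rewrite seriesEord /=; exact: sumr_ge0.
Qed.

Lemma real_eig_le m (A : 'M[R]_m) mu :
  (forall z : R[i], eigenvalue (map_mx (fun r : R => r%:C) A) z -> `|z| <= mu%:C) ->
  forall a, eigenvalue A a -> a <= mu.
Proof.
move=> H a ea.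
have : eigenvalue (map_mx (real_complex R) A) (real_complex R a).
  by rewrite eigenvalue_map.
move/H; rewrite normc_def /= expr0n /= addr0 sqrtr_sqr lecR.
by apply: le_trans; exact: ler_norm.
Qed.

Lemma right_eig m (A : 'M[R]_m) a : eigenvalue A a ->
  exists2 v : 'cV[R]_m, A *m v = a *: v & v != 0.
Proof.
move=> ea.
have : eigenvalue A^T a by rewrite eig_det -det_tr linearB /= tr_scalar_mx trmxK -eig_det.
move/eigenvalueP => [v vA v0]; exists v^T; last by rewrite trmx_eq0.
by rewrite -[A]trmxK -trmx_mul vA linearZ.
Qed.

Lemma mxpow_ge0 m (B : 'M[R]_m.+1) k : (forall i j, 0 <= B i j) ->
  forall i j, 0 <= (B ^+ k) i j.
Proof.
move=> B0; elim: k => [|k IH] i j; first by rewrite expr0 mxE; case: (i == j).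
rewrite exprSr -mulmxE mxE; apply: sumr_ge0 => l _; exact: mulr_ge0.
Qed.

Lemma mxpow_dom m (P B : 'M[R]_m.+1) c k : (forall i j, 0 <= P i j) -> 0 <= c ->
  (forall i j, c * P i j <= B i j) ->
  forall i j, c ^+ k * (P ^+ k) i j <= (B ^+ k) i j.
Proof.
move=> P0 c0 PB; elim: k => [|k IH] i j; first by rewrite !expr0 mul1r.
rewrite !exprSr -!mulmxE !mxE mulr_sumr; apply: ler_sum => l _.
rewrite mulrACA.
apply: ler_pM => //.
- by apply: mulr_ge0; [exact: exprn_ge0 | exact: mxpow_ge0].
- exact: mulr_ge0.
Qed.
End S.

Theorem theorem3 (R : realType) (n : nat)
  (Pi : 'M[R]_n.+1)
  (P w : 'I_n.+1 -> nat -> R)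
  (f g : 'I_n.+1 -> nat -> nat -> R)
  (* Pi nonnegative, row-stochastic, primitive *)
  (HPi0 : forall i j, 0 <= Pi i j)
  (HPi1 : forall i, \sum_j Pi i j = 1)
  (HPiprim : exists k : nat, forall i j, 0 < (Pi ^+ k) i j)
  (* P_i is a probability distribution on the nonnegative integers *)
  (HP0 : forall i d, 0 <= P i d)
  (HP1 : forall i, cvgn (series (P i)) /\ limn (series (P i)) = 1)
  (* degree weights *)
  (Hw : forall i d, 0 < P i d -> 0 < w i d)
  (* adoption rates *)
  (Hf0 : forall i d, f i d 0%N = 0)
  (Hfmono : forall i d a b, (a <= b)%N -> (b <= d)%N -> f i d a <= f i d b)
  (Hf1 : forall i, exists d, (1 <= d)%N /\ 0 < P i d /\ 0 < f i d 1%N)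
  (* abandonment rates *)
  (Hg0 : forall i d, 0 < g i d 0%N)
  (Hgmono : forall i d a b, (a <= b)%N -> (b <= d)%N -> g i d b <= g i d a)
  (* x_i is finite *)
  (Hx : forall i, cvgn (series (x_term P w f g i)))
  (mu : R)
  (Hmu : perron_root (A_mat Pi (x_val P w f g)) mu) :
  small_seed_diffusion (A_mat Pi (x_val P w f g)) <-> 1 < mu.
Proof.
set x := x_val P w f g.
set A := A_mat Pi x.
have xt0 : forall i d, 0 <= x_term P w f g i d.
  move=> i d; rewrite /x_term.
  have [Pz|Pp] := eqVneq (P i d) 0; first by rewrite Pz !mul0r.
  have Pp' : 0 < P i d by rewrite lt_def Pp HP0.
  have wp := Hw i d Pp'.
  apply: divr_ge0; last exact: ltW (Hg0 i d).
  case: d Pp Pp' wp => [|d] _ Pp' wp; first by rewrite /= mulr0 mul0r.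
  apply: mulr_ge0; first by apply: mulr_ge0 => //; apply: mulr_ge0; exact: ltW.
  by rewrite -(Hf0 i d.+1); apply: Hfmono.
have xp : forall j, 0 < x j.
  move=> j; have [d [d1 [Pd fd]]] := Hf1 j.
  apply: (series_pos (d:=d)) (xt0 j) _ (Hx j).
  rewrite /x_term; apply: divr_gt0 (Hg0 j d); apply: mulr_gt0 => //.
  by apply: mulr_gt0; [exact: mulr_gt0 (Hw _ _ Pd) | rewrite ltr0n].
have AE : forall i j, A i j = Pi i j * x j by move=> i j; rewrite /A mxE.
have A0 : forall i j, 0 <= A i j by move=> i j; rewrite AE mulr_ge0 // ltW.
have Hev := real_eig_le Hmu.2.
split.
- move=> Hd; rewrite ltNge; apply/negP => mu1.
  have [v Hv] := Hd 1 ltr01.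
  have [j Hj] := fin_argmin ord0 (fun i => (A *m v) i 0 / v i 0).
  set c := (A *m v) j 0 / v j 0.
  have c1 : 1 < c.
    by rewrite /c ltr_pdivlMr ?mul1r; case: (Hv j) => [? [_ ?]].
  set t := (1 + c) / 2.
  have mut : mu < t.
    apply: le_lt_trans mu1 _.
    by rewrite /t ltr_pdivlMr // mul1r ltrD2l.
  have tc : t < c.
    by rewrite /t ltr_pdivrMr // mulrDr mulr1 ltrD2r.
  have [y [y0 Hy]] := good_all A0 Hev mut.
  have side : forall i, (A *m - v) i 0 <= t * (- v) i 0.
    move=> i; rewrite mulmxN mxE [(- v) i 0]mxE mulrN lerN2.
    have vi := (Hv i).1.
    apply: (le_trans (y := c * v i 0)); first by rewrite ler_pM2r // ltW.
    by rewrite -ler_pdivlMr //; exact: Hj.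
  have := MP A0 y0 Hy side j.
  by rewrite mxE oppr_ge0 leNgt; case: (Hv j) => -> _.
- move=> mu1 eps eps0.
  have mu0 : 0 < mu := lt_trans ltr01 mu1.
  have [v Av v0] := right_eig Hmu.1.
  pose u : 'cV[R]_n.+1 := \col_i `|v i 0|.
  have u0 : forall i, 0 <= u i 0 by move=> i; rewrite mxE.
  have Au : forall i, mu * u i 0 <= (A *m u) i 0.
    move=> i.
    have : (A *m v) i 0 = mu * v i 0 by rewrite Av mxE.
    rewrite mxE => E; rewrite mxE [X in _ <= X]mxE.
    rewrite -(gtr0_norm mu0) -normrM -E.
    apply: (le_trans (ler_norm_sum _ _ _)); apply: ler_sum => l _.
    by rewrite normrM (ger0_norm (A0 i l)) ?mxE.
  have [i0 vi0] : exists i0, v i0 0 != 0.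
    case: (pselect (exists i0, v i0 0 != 0)) => // nE; move: v0.
    have -> : v = 0.
      apply/matrixP => i j; rewrite (ord1 j) mxE; apply/eqP; apply: contrapT => h.
      by apply: nE; exists i; apply/negP.
    by rewrite eqxx.
  have ui0 : 0 < u i0 0 by rewrite mxE normr_gt0.
  have [k Hk] := HPiprim.
  have [jm Hjm] := fin_argmin ord0 x.
  have d0 := xp jm.
  have Adom := @mxpow_dom R n Pi A (x jm) k HPi0 (ltW d0)
    (fun i j => ltac:(rewrite AE mulrC; apply: ler_wpM2l; [exact: HPi0 | exact: Hjm])).
  have Akp : forall i j, 0 < (A ^+ k) i j.
    by move=> i j; apply: lt_le_trans (Adom i j); apply: mulr_gt0 (Hk i j); exact: exprn_gt0.
  pose wv := A ^+ k *m u.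
  have wp : forall i, 0 < wv i 0.
    move=> i; rewrite mxE (bigD1 i0) //=.
    apply: (lt_le_trans (mulr_gt0 (Akp i i0) ui0)); rewrite lerDl.
    by apply: sumr_ge0 => l _; apply: mulr_ge0 => //; exact: ltW.
  have Aw : forall i, mu * wv i 0 <= (A *m wv) i 0.
    move=> i.
    have -> : A *m wv = A ^+ k *m (A *m u).
      by rewrite /wv mulmxA mulmxE -exprS exprSr -mulmxE -mulmxA.
    rewrite !mxE mulr_sumr; apply: ler_sum => l _.
    by rewrite mulrCA; apply: ler_wpM2l; [exact: ltW | exact: Au].
  have [jM HjM] := fin_argmax ord0 (fun i => wv i 0).
  set Mw := wv jM 0.
  have Mw0 : 0 < Mw := wp jM.
  set sc := eps / (2 * Mw).
  have sc0 : 0 < sc by rewrite divr_gt0 // mulr_gt0.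
  exists (sc *: wv) => i.
  have -> : (A *m (sc *: wv)) i 0 = sc * (A *m wv) i 0 by rewrite -scalemxAr mxE.
  rewrite mxE; split; first exact: mulr_gt0.
  split.
    apply: (le_lt_trans (y := sc * Mw)); first by rewrite ler_pM2l //; exact: HjM.
    rewrite /sc invfM mulrA -mulrA mulVf ?gt_eqF // mulr1.
    by rewrite gtr_pMr // invf_lt1 // ltr1n.
  rewrite ltr_pM2l //; apply: lt_le_trans (Aw i).
  by rewrite ltr_pMl.
Qed.
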